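(* Let $f \in \mathbb{N}_0[x^{\pm 1}]$ satisfy $|\operatorname{supp}(f)| \geq 3$. Then $f = g + h$ for some $g, h \in \mathbb{N}_0[x^{\pm 1}]$ such that $g$ is hyper-monolithic and $h(1) \leq g(1)$.
   Context: $\mathbb{N}_0[x^{\pm 1}]$ denotes the semiring of Laurent polynomials in $x$ with nonnegative integer coefficients; $\operatorname{supp}(f)$ is the set of exponents occurring in $f$ with nonzero coefficient. Writing $f = \sum_{i=0}^{n} c_i x^{k_i}$ with $c_i$ positive integers and $k_0 > \cdots > k_n$, $f$ is hyper-monolithic if $|\operatorname{supp}(f)| > 1$ and either $k_0 - k_1 < k_i - k_{i+1}$ for every $i \in \{1,\ldots,n-1\}$, or $k_{n-1} - k_n < k_j - k_{j+1}$ for every $j \in \{0,\ldots,n-2\}$. *)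

(* Defs.v *)
From HB Require Import structures.
From mathcomp Require Import all_boot all_order all_algebra.
From mathcomp Require Import finmap.
Set Implicit Arguments. Unset Strict Implicit. Unset Printing Implicit Defensive.
Import Order.TTheory GRing.Theory Num.Theory.
Local Open Scope fset_scope.
Local Open Scope ring_scope.

(* Laurent polynomials in x with nonnegative integer coefficients:
   finitely supported maps  exponent (int) -> coefficient (nat), default 0.
   f represents  sum_k (f k) x^k. *)
Definition laurentN := {fsfun int -> nat with 0%N}.

Definition lsupp (f : laurentN) : {fset int} := finsupp f.

Definition lexps (f : laurentN) : seq int := sort (fun a b : int => b <= a) (lsupp f).

Definition leval1 (f : laurentN) : nat := (\sum_(k <- lsupp f) f k)%N.

Definition hyper_monolithic (f : laurentN) : Prop :=
  let s := lexps f in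
  let n := (size s).-1 in
  (1 < #|` lsupp f|)%N /\
  ((forall i : nat, (1 <= i)%N -> (i.+1 <= n)%N ->
        s`_0 - s`_1 < s`_i - s`_i.+1)
   \/
   (forall j : nat, (j.+2 <= n)%N ->
        s`_n.-1 - s`_n < s`_j - s`_j.+1)).

(* Main.v *)
Require Import Defs.
From mathcomp Require Import all_boot all_order all_algebra.
From mathcomp Require Import finmap.
From mathcomp Require Import zify.
Set Implicit Arguments. Unset Strict Implicit. Unset Printing Implicit Defensive.
Import Order.TTheory GRing.Theory Num.Theory.

Section Seq.
Local Open Scope ring_scope.
Variable s : seq int.
Variable g : int.
Hypothesis g_pos : 0 < g.
Hypothesis g_min : forall k, (k.+1 < size s)%N -> g <= s`_k - s`_k.+1.

Lemma sum_gap a b : (a <= b)%N -> (b < size s)%N -> (b - a)%:Z * g <= s`_a - s`_b.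
Proof.
move=> ab; elim: b ab => [|b IH] ab bs.
  by move: ab; rewrite leqn0 => /eqP ->; rewrite subnn mul0r subrr.
case: (ltngtP a b.+1) ab => // [ab _|-> _]; last by rewrite subnn mul0r subrr.
have := IH ab (ltnW bs); have := g_min bs.
rewrite subSn // intS mulrDl mul1r; move: (_ * g) => X; lia.
Qed.

Lemma gap2 a b : (a.+2 <= b)%N -> (b < size s)%N -> g < s`_a - s`_b.
Proof.
move=> ab bs; have := sum_gap (leq_trans (leqnSn _) (ltnW ab)) bs.
have : (2 <= b - a)%N by lia.
move: (b - a)%N => d d2 H.
have : 2%:Z * g <= d%:Z * g by rewrite ler_pM2r //; lia.
lia.
Qed.
End Seq.

Section Ks.
Variable ks : seq nat.
Hypothesis ks_sorted : sorted ltn ks.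

Lemma ks_lt i j : (i < j)%N -> (j < size ks)%N -> ((nth 0%N ks i) < (nth 0%N ks j))%N.
Proof.
move=> ij js; apply: (sorted_ltn_nth ltn_trans 0%N ks_sorted) => //; rewrite inE //.
exact: ltn_trans ij js.
Qed.

Lemma ks_le i j : (i <= j)%N -> (j < size ks)%N -> ((nth 0%N ks i) <= (nth 0%N ks j))%N.
Proof.
rewrite leq_eqVlt => /orP [/eqP -> //|ij] js; exact: ltnW (ks_lt ij js).
Qed.

Lemma ks_first p : p \in ks -> p.+1 \in ks -> (forall x, x \in ks -> p <= x)%N ->
  [/\ (1 < size ks)%N, (nth 0%N ks 0) = p & (nth 0%N ks 1) = p.+1].
Proof.
move=> pin p1in pmin.
have i1 : (index p.+1 ks < size ks)%N by rewrite index_mem.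
have i0 : (index p ks < size ks)%N by rewrite index_mem.
have k0 : (nth 0%N ks 0) = p.
  have s0 : (0 < size ks)%N by lia.
  apply/eqP; rewrite eqn_leq pmin ?mem_nth // andbT.
  rewrite -{1}(nth_index 0%N pin); apply: ks_le => //.
have idx1 : (0 < index p.+1 ks)%N.
  rewrite lt0n; apply/negP => /eqP h.
  have := nth_index 0%N p1in; rewrite h k0 => /eqP; lia.
have s2 : (1 < size ks)%N by lia.
split => //; apply/eqP; rewrite eqn_leq; apply/andP; split.
  rewrite -{1}(nth_index 0%N p1in). exact: ks_le.
have := ks_lt (ltn0Sn 0) s2; rewrite k0 //.
Qed.

Lemma ks_last q : q \in ks -> q.+1 \in ks -> (forall x, x \in ks -> x <= q.+1)%N ->
  [/\ (1 < size ks)%N, (nth 0%N ks (size ks).-1) = q.+1 & (nth 0%N ks (size ks).-2) = q].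
Proof.
move=> qin q1in qmax.
have i1 : (index q.+1 ks < size ks)%N by rewrite index_mem.
have i0 : (index q ks < size ks)%N by rewrite index_mem.
have kl : (nth 0%N ks (size ks).-1) = q.+1.
  have s0 : ((size ks).-1 < size ks)%N by lia.
  apply/eqP; rewrite eqn_leq qmax ?mem_nth //=.
  rewrite -{1}(nth_index 0%N q1in); apply: ks_le; lia.
have idx1 : (index q ks < (size ks).-1)%N.
  have : index q ks != (size ks).-1.
    apply/negP => /eqP h.
    have := nth_index 0%N qin; rewrite h kl => /eqP; lia.
  lia.
have s2 : (1 < size ks)%N by lia.
split => //; apply/eqP; rewrite eqn_leq; apply/andP; split.
  have h1 : ((size ks).-2 < (size ks).-1)%N by lia.
  have h2 : ((size ks).-1 < size ks)%N by lia.
  have := ks_lt h1 h2; rewrite kl; lia.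
rewrite -{1}(nth_index 0%N qin); apply: ks_le; lia.
Qed.
End Ks.

Section HM.
Local Open Scope ring_scope.
Variable s : seq int.
Variable g : int.
Hypothesis g_pos : 0 < g.
Hypothesis g_min : forall k, (k.+1 < size s)%N -> g <= s`_k - s`_k.+1.
Variable X : pred nat.
Let ks := [seq k <- iota 0 (size s) | X k].
Let t := map (nth 0 s) ks.

Let ks_sorted : sorted ltn ks.
Proof. exact: (sorted_filter ltn_trans X (iota_ltn_sorted 0 _)). Qed.

Let mem_ks k : (k \in ks) = X k && (k < size s)%N.
Proof. by rewrite mem_filter mem_iota add0n. Qed.

Let nth_t m : (m < size ks)%N -> t`_m = s`_(nth 0%N ks m).
Proof. by move=> ms; rewrite /t (nth_map 0%N). Qed.

Let nth_ks m : (m < size ks)%N -> X (nth 0%N ks m) && (nth 0%N ks m < size s)%N.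
Proof. by move=> ms; rewrite -mem_ks mem_nth. Qed.

Lemma HM_first p :
  (forall k, X k -> (k < size s)%N -> (p <= k)%N) -> X p -> X p.+1 -> (p.+1 < size s)%N ->
  s`_p - s`_p.+1 = g ->
  (forall a, (p < a)%N -> X a -> X a.+1 -> (a.+1 < size s)%N -> g < s`_a - s`_a.+1) ->
  (1 < size t)%N /\
  forall m, (1 <= m)%N -> (m.+1 <= (size t).-1)%N -> t`_0 - t`_1 < t`_m - t`_m.+1.
Proof.
move=> pmin Xp Xp1 p1s gp H.
have [] := @ks_first ks ks_sorted p.
- by rewrite mem_ks Xp; apply: ltn_trans p1s.
- by rewrite mem_ks Xp1.
- by move=> x; rewrite mem_ks => /andP [] /pmin; apply.
move=> s2 k0 k1; rewrite /t size_map; split => // m m1 ms.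
have H2 : (m.+1 < size ks)%N by lia.
have H1 : (m < size ks)%N by lia.
rewrite !nth_t ?k0 ?k1 ?gp //; try lia.
have ab := ks_lt ks_sorted (ltnSn m) H2.
have a1 := ks_le ks_sorted m1 H1.
have /andP [Xa as_] := nth_ks H1.
have /andP [Xb bs] := nth_ks H2.
move: ab a1 Xa as_ Xb bs; rewrite k1.
move: (nth 0%N ks m) (nth 0%N ks m.+1) => a b ab a1 Xa _ Xb bs.
case: (ltngtP a.+1 b) ab => // [lt _|eq _].
  by apply: gap2 => //; lia.
rewrite -eq; apply: H; rewrite ?eq //; lia.
Qed.

Lemma HM_last q :
  (forall k, X k -> (k < size s)%N -> (k <= q.+1)%N) -> X q -> X q.+1 -> (q.+1 < size s)%N ->
  s`_q - s`_q.+1 = g ->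
  (forall a, X a -> X a.+1 -> (a.+1 <= q)%N -> g < s`_a - s`_a.+1) ->
  (1 < size t)%N /\
  forall m, (m.+2 <= (size t).-1)%N ->
    t`_((size t).-1).-1 - t`_((size t).-1) < t`_m - t`_m.+1.
Proof.
move=> qmax Xq Xq1 q1s gq H.
have [] := @ks_last ks ks_sorted q.
- by rewrite mem_ks Xq; apply: ltn_trans q1s.
- by rewrite mem_ks Xq1.
- by move=> x; rewrite mem_ks => /andP [] /qmax; apply.
move=> s2 kl kl2; rewrite /t size_map; split => // m ms.
have H2 : (m.+1 < size ks)%N by lia.
have H1 : (m < size ks)%N by lia.
have H3 : ((size ks).-2 < size ks)%N by lia.
have H4 : ((size ks).-1 < size ks)%N by lia.
rewrite !nth_t // kl kl2 gq.
have ab := ks_lt ks_sorted (ltnSn m) H2.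
have H5 : (m.+1 <= (size ks).-2)%N by lia.
have a1 := ks_le ks_sorted H5 H3.
rewrite kl2 in a1.
have /andP [Xa as_] := nth_ks H1.
have /andP [Xb bs] := nth_ks H2.
move: ab a1 Xa as_ Xb bs.
move: (nth 0%N ks m) (nth 0%N ks m.+1) => a b ab a1 Xa _ Xb bs.
case: (ltngtP a.+1 b) ab => // [lt _|eq _].
  by apply: gap2 => //; lia.
rewrite -eq; apply: H; rewrite ?eq //; lia.
Qed.
End HM.

Section Laurent.
Local Open Scope ring_scope.

Definition restr (f : laurentN) (Y : pred int) : laurentN :=
  [fsfun k in lsupp f => if Y k then f k else 0%N | 0%N].

Lemma restrE f Y k : restr f Y k = if Y k then f k else 0%N.
Proof.
rewrite /restr fsfun_fun; case: ifP => // kf.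
have : f k == 0%N by rewrite -(memNfinsupp f k) /lsupp kf.
by move/eqP ->; case: (Y k).
Qed.

Lemma mem_lsupp_restr f Y k : (k \in lsupp (restr f Y)) = Y k && (k \in lsupp f).
Proof. by rewrite /lsupp !mem_finsupp restrE; case: (Y k). Qed.

Lemma leval1_seq (u : laurentN) (l : seq int) :
  uniq l -> {subset lsupp u <= l} -> leval1 u = (\sum_(x <- l) u x)%N.
Proof.
move=> ul sub; rewrite /leval1 [RHS](bigID (mem (lsupp u))) /=.
rewrite [X in (_ = _ + X)%N]big1 ?addn0; last first.
  by move=> x /negbTE xn; apply/eqP; rewrite -memNfinsupp /lsupp xn.
rewrite -[RHS]big_filter; apply: perm_big; apply: uniq_perm.
- exact: fset_uniq.
- exact: filter_uniq.
- by move=> x; rewrite mem_filter /=; case: (boolP (x \in lsupp u)) => // /sub ->.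
Qed.

Variable f : laurentN.
Let s := lexps f.

Lemma s_uniq : uniq s.
Proof. by rewrite sort_uniq fset_uniq. Qed.

Lemma mem_s x : (x \in s) = (x \in lsupp f).
Proof. by rewrite mem_sort. Qed.

Lemma s_sorted : sorted (fun a b : int => b <= a) s.
Proof. by apply: sort_sorted => a b; apply: le_total. Qed.

Lemma s_strict a b : (a < b)%N -> (b < size s)%N -> s`_b < s`_a.
Proof.
move=> ab bs; rewrite lt_neqAle.
have -> : s`_b <= s`_a.
  apply: (sorted_ltn_nth _ 0 s_sorted) => //; rewrite ?inE //; last exact: ltn_trans ab bs.
  by move=> x y z /= h1 h2; apply: le_trans h2 h1.
rewrite andbT; apply/negP => /eqP /(congr1 (index^~ s)).
rewrite !index_uniq ?s_uniq //; [lia | exact: ltn_trans ab bs].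
Qed.

Lemma lexps_restr (X : pred nat) :
  lexps (restr f (fun x => X (index x s))) =
  map (nth 0 s) [seq k <- iota 0 (size s) | X k].
Proof.
have -> : map (nth 0 s) [seq k <- iota 0 (size s) | X k] =
          [seq x <- s | X (index x s)].
  have E : s = map (nth 0 s) (iota 0 (size s)) by rewrite -/(mkseq _ _) mkseq_nth.
  set P := (fun x => X (index x s)).
  rewrite [in RHS]E filter_map; congr map.
  apply: eq_in_filter => k; rewrite mem_iota add0n => /andP [_ ks].
  by rewrite /preim /P /= index_uniq // s_uniq.
have tr : transitive (fun a b : int => b <= a).
  by move=> x y z /= h1 h2; apply: le_trans h2 h1.
have an : antisymmetric (fun a b : int => b <= a).
  by move=> x y /andP [h1 h2]; apply: le_anti; rewrite h1 h2.
have := sorted_eq tr an.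
apply.
- by apply: sort_sorted => a b; apply: le_total.
- by apply: sorted_filter; last exact: s_sorted.
apply: uniq_perm.
- by rewrite sort_uniq fset_uniq.
- by rewrite filter_uniq // s_uniq.
by move=> x; rewrite mem_sort mem_lsupp_restr mem_filter mem_s.
Qed.

End Laurent.

Section MinIdx.
Local Open Scope ring_scope.
Lemma first_min (F : nat -> int) n : (0 < n)%N ->
  exists i, [/\ (i < n)%N, (forall k, (k < n)%N -> F i <= F k) &
                (forall k, (k < i)%N -> F i < F k)].
Proof.
elim: n => // n IH _; case: (posnP n) => [->|n0].
  by exists 0%N; split => // -[|k].
have [i [i_n imin istr]] := IH n0.
case: (ltP (F n) (F i)) => h.
  exists n; split => // k; rewrite ?ltnS.
    rewrite leq_eqVlt => /orP [/eqP -> //|kn]; exact: le_trans (ltW h) (imin _ kn).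
  by move=> kn; apply: lt_le_trans h (imin _ kn).
exists i; split => //; first exact: ltn_trans i_n _.
by move=> k; rewrite ltnS leq_eqVlt => /orP [/eqP -> //|kn]; apply: imin.
Qed.

Lemma last_min (F : nat -> int) n : (0 < n)%N ->
  exists i, [/\ (i < n)%N, (forall k, (k < n)%N -> F i <= F k) &
                (forall k, (i < k)%N -> (k < n)%N -> F i < F k)].
Proof.
elim: n => // n IH _; case: (posnP n) => [->|n0].
  by exists 0%N; split => // -[|k].
have [i [i_n imin istr]] := IH n0.
case: (leP (F n) (F i)) => h.
  exists n; split => // k; rewrite ?ltnS.
    rewrite leq_eqVlt => /orP [/eqP -> //|kn]; exact: le_trans h (imin _ kn).
  by move=> nk kn; lia.
exists i; split => //; first exact: ltn_trans i_n _.
  by move=> k; rewrite ltnS leq_eqVlt => /orP [/eqP ->|kn]; [exact: ltW h|apply: imin].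
move=> k ik; rewrite ltnS leq_eqVlt => /orP [/eqP -> //|kn]; exact: istr.
Qed.
End MinIdx.

Section Main.
Local Open Scope ring_scope.
Variable f : laurentN.
Let s := lexps f.

Lemma sub_s Y : {subset lsupp (restr f Y) <= s}.
Proof. by move=> x; rewrite mem_lsupp_restr mem_s => /andP []. Qed.

Lemma final_step (Y : pred int) :
  hyper_monolithic (restr f Y) -> (leval1 f <= 2 * leval1 (restr f Y))%N ->
  exists g h : laurentN,
    (forall k : int, f k = (g k + h k)%N) /\
    hyper_monolithic g /\ (leval1 h <= leval1 g)%N.
Proof.
move=> hm le2; exists (restr f Y), (restr f (predC Y)).
have E : forall k, f k = (restr f Y k + restr f (predC Y) k)%N.
  by move=> k; rewrite !restrE /=; case: (Y k); rewrite ?addn0.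
split => //; split => //.
have Hf : leval1 f = (\sum_(x <- s) f x)%N.
  by apply: leval1_seq; [exact: s_uniq | move=> x; rewrite mem_s].
have Hg := leval1_seq (s_uniq f) (@sub_s Y).
have Hh := leval1_seq (s_uniq f) (@sub_s (predC Y)).
have : leval1 f = (leval1 (restr f Y) + leval1 (restr f (predC Y)))%N.
  by rewrite Hf Hg Hh -big_split /=; apply: eq_bigr => x _; apply: E.
lia.
Qed.

Lemma weightE (X : pred nat) :
  leval1 (restr f (fun x => X (index x s))) =
  (\sum_(x <- s) (if X (index x s) then f x else 0))%N.
Proof.
rewrite (leval1_seq (s_uniq f) (@sub_s _)); apply: eq_bigr => x _; by rewrite restrE.
Qed.

Lemma card_lsupp (u : laurentN) : #|` lsupp u| = size (lexps u).
Proof. by rewrite size_sort. Qed.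

Variable g : int.
Hypothesis g_pos : 0 < g.
Hypothesis g_min : forall k, (k.+1 < size s)%N -> g <= s`_k - s`_k.+1.

Lemma hm_first (X : pred nat) p :
  (forall k, X k -> (k < size s)%N -> (p <= k)%N) -> X p -> X p.+1 -> (p.+1 < size s)%N ->
  s`_p - s`_p.+1 = g ->
  (forall a, (p < a)%N -> X a -> X a.+1 -> (a.+1 < size s)%N -> g < s`_a - s`_a.+1) ->
  hyper_monolithic (restr f (fun x => X (index x s))).
Proof.
move=> h1 h2 h3 h4 h5 h6.
have [sz H] := HM_first g_pos g_min h1 h2 h3 h4 h5 h6.
rewrite /hyper_monolithic card_lsupp lexps_restr; split => //; left; exact: H.
Qed.

Lemma hm_last (X : pred nat) q :
  (forall k, X k -> (k < size s)%N -> (k <= q.+1)%N) -> X q -> X q.+1 -> (q.+1 < size s)%N ->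
  s`_q - s`_q.+1 = g ->
  (forall a, X a -> X a.+1 -> (a.+1 <= q)%N -> g < s`_a - s`_a.+1) ->
  hyper_monolithic (restr f (fun x => X (index x s))).
Proof.
move=> h1 h2 h3 h4 h5 h6.
have [sz H] := HM_last g_pos g_min h1 h2 h3 h4 h5 h6.
rewrite /hyper_monolithic card_lsupp lexps_restr; split => //; right; exact: H.
Qed.
End Main.

Theorem lemma2p9 (f : laurentN) :
  (3 <= #|` lsupp f|)%N ->
  exists g h : laurentN,
    (forall k : int, f k = (g k + h k)%N) /\
    hyper_monolithic g /\ (leval1 h <= leval1 g)%N.
Proof.
move=> H3.
set s := lexps f.
have sN : (3 <= size s)%N by rewrite size_sort.
pose gp k := (s`_k - s`_k.+1)%R.
have gp_pos k : (k.+1 < size s)%N -> (0 < gp k)%R.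
  by move=> ks; rewrite /gp subr_gt0; apply: s_strict.
have n0 : (0 < (size s).-1)%N by lia.
have [i [iN imin ifirst]] := first_min gp n0.
have [j [jN jmin jlast]] := last_min gp n0.
set g := gp i.
have gj : gp j = g.
  by apply: le_anti; rewrite jmin // imin.
have ij : (i <= j)%N.
  rewrite leqNgt; apply/negP => ji; have := ifirst _ ji; rewrite gj /g lt_def eqxx //.
have g_pos : (0 < g)%R by apply: gp_pos; lia.
have g_min : forall k, (k.+1 < size s)%N -> (g <= s`_k - s`_k.+1)%R.
  by move=> k ks; apply: imin; lia.
have Hf : forall k, (k < i)%N -> (g < s`_k - s`_k.+1)%R by move=> k ki; exact: ifirst.
have Hl : forall k, (j < k)%N -> (k.+1 < size s)%N -> (g < s`_k - s`_k.+1)%R.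
  by move=> k jk ks; rewrite -gj; apply: jlast => //; lia.
pose XB1 := fun k : nat => (k == i) || ((i < k) && (k %% 2 == i.+1 %% 2))%N || (j.+1 < k)%N.
have hmB1 : hyper_monolithic (restr f (fun x => XB1 (index x s))).
  apply: (@hm_first f g g_pos g_min _ i); rewrite /XB1 /= -/s //; try lia.
  move=> a ha Xa Xa1 aN; case: (ltnP j a) => aj; first exact: Hl.
  exfalso; lia.
have [XB2 [hmB2 covB bothB]] : exists XB2 : pred nat,
  [/\ hyper_monolithic (restr f (fun x => XB2 (index x s))),
      (forall k, (i <= k)%N -> XB1 k || XB2 k) & (forall k, (j.+1 < k)%N -> XB2 k)].
  case: (boolP ((i.+2 < size s)%N && (gp i.+1 == g))) => c.
    have [c1 /eqP c2] := andP c.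
    pose Y := (fun k : nat => (k == i.+1) || ((i.+1 < k) && (k %% 2 == i %% 2))%N || (j.+1 < k)%N).
    exists Y.
    split; [|rewrite /XB1 /Y => k /=; lia|rewrite /Y => k /=; lia].
    apply: (@hm_first f g g_pos g_min Y i.+1); rewrite /Y /= -/s //; try lia.
    move=> a ha Xa Xa1 aN; case: (ltnP j a) => aj; first exact: Hl.
    exfalso; lia.
  pose Y := (fun k : nat => (k == i) || (k == i.+1) ||
                         ((i.+1 < k) && (k %% 2 == i %% 2))%N || (j.+1 < k)%N).
  exists Y.
  split; [|rewrite /XB1 /Y => k /=; lia|rewrite /Y => k /=; lia].
  apply: (@hm_first f g g_pos g_min Y i); rewrite /Y /= -/s //; try lia.
  move=> a ha Xa Xa1 aN; case: (ltnP j a) => aj; first exact: Hl.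
  case: (eqVneq a i.+1) => [ai|ai].
    subst a; have := g_min _ aN; have : (gp i.+1 != g).
      by move: c; rewrite aN /=.
    rewrite /gp; move: (s`_i.+1 - s`_i.+2)%R => x; rewrite lt_def => -> -> //.
  exfalso; lia.
pose XA1 := fun k : nat => (k == j.+1) || ((k < j.+1) && (k %% 2 == j %% 2))%N || (k < i)%N.
have hmA1 : hyper_monolithic (restr f (fun x => XA1 (index x s))).
  apply: (@hm_last f g g_pos g_min _ j); rewrite /XA1 /= -/s //; try lia.
  move=> a Xa Xa1 aj; case: (ltnP a i) => ai; first exact: Hf.
  exfalso; lia.
have [XA2 [hmA2 covA bothA]] : exists XA2 : pred nat,
  [/\ hyper_monolithic (restr f (fun x => XA2 (index x s))),
      (forall k, (k <= j.+1)%N -> XA1 k || XA2 k) & (forall k, (k < i)%N -> XA2 k)].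
  case: (boolP ((0 < j)%N && (gp j.-1 == g))) => c.
    have [c1 /eqP c2] := andP c.
    pose Y := (fun k : nat => (k == j) || ((k < j) && (k %% 2 == j.+1 %% 2))%N || (k < i)%N).
    exists Y.
    split; [|rewrite /XA1 /Y => k /=; lia|rewrite /Y => k /=; lia].
    apply: (@hm_last f g g_pos g_min Y j.-1); rewrite /Y /= -/s //; try lia.
    move=> a Xa Xa1 aj; case: (ltnP a i) => ai; first exact: Hf.
    exfalso; lia.
  pose Y := (fun k : nat => (k == j.+1) || (k == j) ||
                         ((k < j) && (k %% 2 == j.+1 %% 2))%N || (k < i)%N).
  exists Y.
  split; [|rewrite /XA1 /Y => k /=; lia|rewrite /Y => k /=; lia].
  apply: (@hm_last f g g_pos g_min Y j); rewrite /Y /= -/s //; try lia.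
  move=> a Xa Xa1 aj; case: (ltnP a i) => ai; first exact: Hf.
  case: (eqVneq a.+1 j) => [ai1|ai1].
    have aN : (a.+1 < size s)%N by lia.
    have := g_min _ aN; have : (gp a != g).
      by move: c; rewrite -ai1 /=.
    rewrite /gp; move: (s`_a - s`_a.+1)%R => x; rewrite lt_def => -> -> //.
  exfalso; lia.
have cnt : forall k, (k < size s)%N -> (2 <= XB1 k + XB2 k + XA1 k + XA2 k)%N.
  move=> k ks; case: (ltnP k i) => ki.
    have h1 : XA1 k by rewrite /XA1 ki !orbT.
    by rewrite h1 bothA //; lia.
  case: (ltnP j.+1 k) => jk.
    have h1 : XB1 k by rewrite /XB1 jk !orbT.
    by rewrite h1 bothB //; lia.
  have := covB _ ki; have := covA _ jk.
  by case: (XB1 k); case: (XB2 k); case: (XA1 k); case: (XA2 k).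
pose w (X : pred nat) := (\sum_(x <- s) (if X (index x s) then f x else 0))%N.
have Hw : (2 * leval1 f <= w XB1 + w XB2 + w XA1 + w XA2)%N.
  rewrite (leval1_seq (s_uniq f)); last by move=> x; rewrite mem_s.
  rewrite /w -!big_split big_distrr /= big_seq_cond [X in (_ <= X)%N]big_seq_cond.
  apply: leq_sum => x /andP [xs _].
  have := cnt (index x s); rewrite index_mem -/s xs => /(_ isT).
  case: (XB1 _); case: (XB2 _); case: (XA1 _); case: (XA2 _) => //= _; lia.
case: (leqP (leval1 f) (2 * w XB1)) => h1.
  by apply: (final_step hmB1); rewrite weightE.
case: (leqP (leval1 f) (2 * w XB2)) => h2.
  by apply: (final_step hmB2); rewrite weightE.
case: (leqP (leval1 f) (2 * w XA1)) => h3.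
  by apply: (final_step hmA1); rewrite weightE.
case: (leqP (leval1 f) (2 * w XA2)) => h4.
  by apply: (final_step hmA2); rewrite weightE.
exfalso; lia.
Qed.
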